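(* Under the setting described in the context (deterministic case, with exact partial gradients $G_{i_k} = U_{i_k}^T g(x_k)$, i.e. $\bar\sigma_k = 0$ for $k=1,\ldots,N$), suppose the random block indices $\{i_k\}$ are uniformly distributed, i.e. $p_1 = \cdots = p_b = 1/b$, and the stepsizes are set to $\gamma_k = 1/\bar L$, $k = 1,\ldots,N$, where $\bar L := \max_{i=1,\ldots,b} L_i$. Then for any $N \ge 1$, $$\mathbb{E}\big[\|\mathcal{G}_X(x_R, g(x_R), \gamma_R)\|^2\big] \le \frac{2 b \bar L\,[\phi(x_1) - \phi^*]}{N}.$$
   Context: Consider the composite problem $\phi^* := \min_{x \in X}\{\phi(x) := f(x) + \chi(x)\}$, where $X = X_1 \times \cdots \times X_b$ with $X_i \subseteq \mathbb{R}^{n_i}$ closed convex, $\sum_i n_i = n$. Let $U_i \in \mathbb{R}^{n\times n_i}$ with $(U_1,\ldots,U_b) = I_n$, $x^{(i)} = U_i^T x$, and $\|x\|^2 = \sum_{i=1}^b \|x^{(i)}\|_i^2$. The function $f$ is smooth but possibly nonconvex, with gradient $g(\cdot)$ whose blocks $g_i = U_i^T g$ satisfy $\|g_i(x + U_i\rho_i) - g_i(x)\|_{i,*} \le L_i \|\rho_i\|_i$ for all $\rho_i \in \mathbb{R}^{n_i}$. The function $\chi$ is convex and block separable: $\chi(x) = \sum_i \chi_i(x^{(i)})$ with $\chi_i$ closed convex. For each $i$, $\omega_i: X_i \to \mathbb{R}$ is continuously differentiable and $1$-strongly convex w.r.t. $\|\cdot\|_i$, with Bregman distance $V_i(z,x)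 = \omega_i(x) - \omega_i(z) - \langle \nabla\omega_i(z), x - z\rangle$, satisfying the quadratic growth condition $V_i(z,x) \le \frac{Q}{2}\|z - x\|_i^2$. The composite prox-mapping is $\mathcal{P}_i(x, y, \gamma) := \arg\min_{z \in X_i} \{\langle y, z - x\rangle + \frac{1}{\gamma} V_i(z,x) + \chi_i(z)\}$, and the composite projected gradient $\mathcal{G}_X(x,y,\gamma) = (\mathcal{G}_1,\ldots,\mathcal{G}_b)$ has blocks $\mathcal{G}_i(x,y,\gamma) := \frac{1}{\gamma}[U_i^T x - \mathcal{P}_i(U_i^T x, U_i^T y, \gamma)]$. The nonconvex stochastic block mirror descent algorithm: given $x_1 \in X$, stepsizes $\gamma_k < 2/L_i$ and probabilities $p_i$, for $k = 1,\ldots,N$ draw $i_k$ with $\Pr\{i_k = i\} = p_i$, compute the partial gradient $G_{i_k}$ (here $G_{i_k} = U_{i_k}^T g(x_k)$), and set $x_{k+1}^{(i_k)} = \mathcal{P}_{i_k}(x_k^{(i_k)}, G_{i_k}, \gamma_k)$, $x_{k+1}^{(i)} = x_k^{(i)}$ for $i \ne i_k$. The output is $\bar x_N = x_R$, where $R$ is random with $\Pr(R = k) = \frac{\gamma_k \min_{i} p_i(1 - \frac{L_i}{2}\gamma_k)}{\sum_{j=1}^N \gamma_j \min_i p_i (1 - \frac{L_i}{2}\gamma_j)}$, $k = 1,\ldots,N$. The expectation is taken w.r.t. $\{i_k\}$ and $R$. *)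

(* Defs.v *)
From mathcomp Require Import all_boot all_order all_algebra.
From mathcomp Require Import all_classical all_reals all_analysis.
Import Order.TTheory GRing.Theory Num.Theory numFieldNormedType.Exports.

Set Implicit Arguments.
Unset Strict Implicit.
Unset Printing Implicit Defensive.

Local Open Scope ring_scope.
Local Open Scope classical_set_scope.

Section Defs.
Variable R : realType.

Definition dotr (m : nat) (y z : 'rV[R]_m) : R := \sum_(j < m) y 0 j * z 0 j.

Definition is_norm (m : nat) (nr : 'rV[R]_m -> R) : Prop :=
  [/\ (forall z, 0 <= nr z),
      (forall z, nr z = 0 -> z = 0),
      (forall (a : R) z, nr (a *: z) = `|a| * nr z) &
      (forall z w, nr (z + w) <= nr z + nr w)].

(* ||y||_* <= c, where ||y||_* := sup_{ ||z|| <= 1 } <y, z> is the dual norm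
   of nr (this is the literal unfolding of "sup <= c"). *)
Definition dual_norm_le (m : nat) (nr : 'rV[R]_m -> R) (y : 'rV[R]_m) (c : R)
  : Prop := forall z, nr z <= 1 -> dotr y z <= c.

Definition strongly_convex_on (m : nat) (X : set 'rV[R]_m)
  (nr : 'rV[R]_m -> R) (h : 'rV[R]_m -> R) : Prop :=
  forall x y (t : R), x \in X -> y \in X -> 0 <= t <= 1 ->
    h (t *: x + (1 - t) *: y)
      <= t * h x + (1 - t) * h y - t * (1 - t) / 2 * nr (x - y) ^+ 2.

Definition closed_fun_on (m : nat) (X : set 'rV[R]_m) (h : 'rV[R]_m -> R)
  : Prop :=
  lower_semicontinuous (fun z => if z \in X then (h z)%:E else +oo%E).

Definition has_gradient_at (m : nat) (h : 'rV[R]_m -> R)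
  (dh : 'rV[R]_m -> 'rV[R]_m) (z : 'rV[R]_m) : Prop :=
  differentiable h z /\ forall v, 'd h z v = dotr (dh z) v.

Definition bregman (m : nat) (omega : 'rV[R]_m -> R)
  (domega : 'rV[R]_m -> 'rV[R]_m) (z x : 'rV[R]_m) : R :=
  omega x - omega z - dotr (domega z) (x - z).

Definition prox_obj (m : nat) (omega : 'rV[R]_m -> R)
  (domega : 'rV[R]_m -> 'rV[R]_m) (chi : 'rV[R]_m -> R)
  (x y : 'rV[R]_m) (gamma : R) (z : 'rV[R]_m) : R :=
  dotr y (z - x) + gamma^-1 * bregman omega domega x z + chi z.

Definition is_prox_map (m : nat) (X : set 'rV[R]_m) (omega : 'rV[R]_m -> R)
  (domega : 'rV[R]_m -> 'rV[R]_m) (chi : 'rV[R]_m -> R)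
  (P : 'rV[R]_m -> 'rV[R]_m -> R -> 'rV[R]_m) : Prop :=
  forall x y (gamma : R), x \in X -> 0 < gamma ->
    P x y gamma \in X /\
    forall z, z \in X ->
      prox_obj omega domega chi x y gamma (P x y gamma)
        <= prox_obj omega domega chi x y gamma z.

Variables (b : nat) (n : 'I_b -> nat).
Local Notation N := (\sum_(i < b) n i)%N.

Definition blk (x : 'rV[R]_N) (i : 'I_b) : 'rV[R]_(n i) := submxrow x i.

Definition embed (i : 'I_b) (rho : 'rV[R]_(n i)) : 'rV[R]_N :=
  mxrow (@dfwith _ (fun j => 'rV[R]_(n j)) (fun j => 0) i rho).

Definition upd (x : 'rV[R]_N) (i : 'I_b) (v : 'rV[R]_(n i)) : 'rV[R]_N :=
  mxrow (@dfwith _ (fun j => 'rV[R]_(n j)) (blk x) i v).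

Definition inX (X : forall i, set 'rV[R]_(n i)) (x : 'rV[R]_N) : Prop :=
  forall i, blk x i \in X i.

Definition phi (f : 'rV[R]_N -> R) (chi : forall i, 'rV[R]_(n i) -> R)
  (x : 'rV[R]_N) : R := f x + \sum_(i < b) chi i (blk x i).

Definition gradmap_sqnorm (nrm : forall i, 'rV[R]_(n i) -> R)
  (P : forall i, 'rV[R]_(n i) -> 'rV[R]_(n i) -> R -> 'rV[R]_(n i))
  (x y : 'rV[R]_N) (gamma : R) : R :=
  \sum_(i < b) nrm i (gamma^-1 *: (blk x i - P i (blk x i) (blk y i) gamma)) ^+ 2.

(* Iterates of the (deterministic-gradient) nonconvex SBMD algorithm for a
   given realization s of the block indices.  0-based: sbmd_iter 0 = x_1,
   and sbmd_iter k.+1 is obtained from sbmd_iter k using block s k and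
   stepsize gamma k (paper: x_{k+2} from x_{k+1} with i_{k+1}, gamma_{k+1}). *)
Fixpoint sbmd_iter (K : nat) (g : 'rV[R]_N -> 'rV[R]_N)
  (P : forall i, 'rV[R]_(n i) -> 'rV[R]_(n i) -> R -> 'rV[R]_(n i))
  (gamma : nat -> R) (x1 : 'rV[R]_N) (s : 'I_K -> 'I_b) (k : nat)
  : 'rV[R]_N :=
  match k with
  | 0 => x1
  | k'.+1 =>
      let x := sbmd_iter g P gamma x1 s k' in
      match (insub k' : option 'I_K) with
      | Some j => let i := s j in
                  upd x (P i (blk x i) (blk (g x) i) (gamma k'))
      | None => x
      end
  end.

Definition bmin (F : 'I_b -> R) : R :=
  match b return ('I_b -> R) -> R with
  | 0 => fun _ => 0
  | b'.+1 => fun F => \big[Num.min/F ord0]_(i < b'.+1) F i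
  end F.

Definition bmax (F : 'I_b -> R) : R :=
  match b return ('I_b -> R) -> R with
  | 0 => fun _ => 0
  | b'.+1 => fun F => \big[Num.max/F ord0]_(i < b'.+1) F i
  end F.

Definition probR_weight (p L : 'I_b -> R) (gamma : nat -> R) (k : nat) : R :=
  gamma k * bmin (fun i => p i * (1 - L i / 2 * gamma k)).

Definition probR (K : nat) (p L : 'I_b -> R) (gamma : nat -> R) (k : nat) : R :=
  probR_weight p L gamma k / \sum_(j < K) probR_weight p L gamma j.

(* E[ ||G_X(x_R, g(x_R), gamma_R)||^2 ], expectation w.r.t. the i.i.d.
   indices i_1..i_K (Pr{i_k = i} = p_i) and the independent random R. *)
Definition expected_gradmap_sqnorm (K : nat) (p L : 'I_b -> R)
  (nrm : forall i, 'rV[R]_(n i) -> R) (g : 'rV[R]_N -> 'rV[R]_N)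
  (P : forall i, 'rV[R]_(n i) -> 'rV[R]_(n i) -> R -> 'rV[R]_(n i))
  (gamma : nat -> R) (x1 : 'rV[R]_N) : R :=
  \sum_(s : {ffun 'I_K -> 'I_b})
    (\prod_(j < K) p (s j)) *
    \sum_(k < K) probR K p L gamma k *
      (let xk := sbmd_iter g P gamma x1 s k in
       gradmap_sqnorm nrm P xk (g xk) (gamma k)).

End Defs.

(* Main.v *)
Require Import Defs.
From mathcomp Require Import all_boot all_order all_algebra.
From mathcomp Require Import all_classical all_reals all_analysis.
Import Order.TTheory GRing.Theory Num.Theory numFieldNormedType.Exports.
From mathcomp Require Import ring lra.
Local Open Scope ring_scope.
Local Open Scope classical_set_scope.

Set Implicit Arguments.
Unset Strict Implicit.
Unset Printing Implicit Defensive.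

Section Blocks.
Variable R : realType.

Lemma dotrE m (y z : 'rV[R]_m) : dotr y z = (y *m z^T) 0 0.
Proof. by rewrite /dotr mxE; apply: eq_bigr => j _; rewrite mxE. Qed.

Lemma dotrDr m (y z w : 'rV[R]_m) : dotr y (z + w) = dotr y z + dotr y w.
Proof. by rewrite /dotr -big_split; apply: eq_bigr => j _; rewrite mxE mulrDr. Qed.
Lemma dotrDl m (y z w : 'rV[R]_m) : dotr (y + z) w = dotr y w + dotr z w.
Proof. by rewrite /dotr -big_split; apply: eq_bigr => j _; rewrite mxE mulrDl. Qed.
Lemma dotrZr m (a : R) (y z : 'rV[R]_m) : dotr y (a *: z) = a * dotr y z.
Proof. by rewrite /dotr mulr_sumr; apply: eq_bigr => j _; rewrite mxE mulrCA. Qed.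
Lemma dotrNr m (y z : 'rV[R]_m) : dotr y (- z) = - dotr y z.
Proof. by rewrite -scaleN1r dotrZr mulN1r. Qed.
Lemma dotrNl m (y z : 'rV[R]_m) : dotr (- y) z = - dotr y z.
Proof. rewrite /dotr -sumrN; apply: eq_bigr => j _; rewrite mxE mulNr //. Qed.
Lemma dotrBr m (y z w : 'rV[R]_m) : dotr y (z - w) = dotr y z - dotr y w.
Proof. by rewrite dotrDr dotrNr. Qed.
Lemma dotrBl m (y z w : 'rV[R]_m) : dotr (y - z) w = dotr y w - dotr z w.
Proof. by rewrite dotrDl dotrNl. Qed.
Lemma dotr0r m (y : 'rV[R]_m) : dotr y 0 = 0.
Proof. by rewrite /dotr big1 // => j _; rewrite mxE mulr0. Qed.

Variables (b : nat) (n : 'I_b -> nat).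
Local Notation NN := (\sum_(i < b) n i)%N.

Lemma dotr_blk (y z : 'rV[R]_NN) :
  dotr y z = \sum_(i < b) dotr (blk y i) (blk z i).
Proof.
rewrite dotrE -{1}(submxrowK y) -{1}(submxrowK z) tr_mxrow mul_mxrow_mxcol.
rewrite summxE; apply: eq_bigr => i _.
by rewrite dotrE /blk tr_submxrow.
Qed.


Lemma blk_embed_id i (d : 'rV[R]_(n i)) : blk (embed d) i = d.
Proof. by rewrite /blk /embed mxrowK; case: eqP => // ii; rewrite eq_axiomK. Qed.

Lemma blk_embed_ne i (d : 'rV[R]_(n i)) j : i != j -> blk (embed d) j = 0.
Proof. by move=> ij; rewrite /blk /embed mxrowK; case: eqP => // ii; rewrite ii eqxx in ij. Qed.

Lemma blk_upd_id x i (v : 'rV[R]_(n i)) : blk (upd x v) i = v.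
Proof. by rewrite /blk /upd mxrowK; case: eqP => // ii; rewrite eq_axiomK. Qed.

Lemma blk_upd_ne x i (v : 'rV[R]_(n i)) j : i != j -> blk (upd x v) j = blk x j.
Proof. by move=> ij; rewrite /blk /upd mxrowK; case: eqP => // ii; rewrite ii eqxx in ij. Qed.

Lemma blkD (x y : 'rV[R]_NN) i : blk (x + y) i = blk x i + blk y i.
Proof. exact: submxrowD. Qed.
Lemma blkZ (a : R) (x : 'rV[R]_NN) i : blk (a *: x) i = a *: blk x i.
Proof. by apply/matrixP => k l; rewrite !mxE. Qed.

Lemma embedZ i (a : R) (d : 'rV[R]_(n i)) : embed (a *: d) = a *: embed d.
Proof.
apply/mxrowP => j; rewrite -/(blk _ j) -/(blk _ j) blkZ.
have [<-|ij] := eqVneq i j; first by rewrite !blk_embed_id.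
by rewrite !blk_embed_ne // scaler0.
Qed.

Lemma upd_embed x i (v : 'rV[R]_(n i)) : upd x v = x + embed (v - blk x i).
Proof.
apply/mxrowP => j; rewrite -/(blk _ j) -/(blk _ j) blkD.
have [<-|ij] := eqVneq i j; first by rewrite blk_upd_id blk_embed_id addrC subrK.
by rewrite blk_upd_ne // blk_embed_ne // addr0.
Qed.

Lemma dotr_embed (y : 'rV[R]_NN) i (d : 'rV[R]_(n i)) :
  dotr y (embed d) = dotr (blk y i) d.
Proof.
rewrite dotr_blk (bigD1 i) //= blk_embed_id big1 ?addr0 // => j ji.
by rewrite blk_embed_ne 1?eq_sym // dotr0r.
Qed.

Lemma phi_upd f (chi : forall i, 'rV[R]_(n i) -> R) x i (v : 'rV[R]_(n i)) :
  phi f chi (upd x v) = f (upd x v) + chi i v - chi i (blk x i)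
    + \sum_(j < b) chi j (blk x j).
Proof.
rewrite /phi (bigD1 i) //= [in RHS](bigD1 i) //= blk_upd_id.
rewrite (eq_bigr (fun j => chi j (blk x j))); last first.
  by move=> j ji; rewrite blk_upd_ne // eq_sym.
lra.
Qed.
End Blocks.

Section An.
Variable R : realType.
Local Open Scope convex_scope.

Lemma breg_ge m (X : set 'rV[R]_m) nr om dom (x z : 'rV[R]_m) :
  strongly_convex_on X nr om -> has_gradient_at om dom x ->
  x \in X -> z \in X -> nr (z - x) ^+ 2 / 2 <= bregman om dom x z.
Proof.
move=> sc [dx dxe] xX zX.
set D := nr (z - x) ^+ 2.
rewrite /bregman -dxe -deriveE //.
have Hq := @diff_derivable _ _ _ _ _ (z - x) dx.
rewrite /derivable in Hq.
set q := (fun h : R => _) in Hq.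
have Hq' : q @ 0^'+ --> 'D_(z - x) om x.
  apply: cvg_trans Hq; apply: cvg_app; apply: within_subset => h /= h0.
  by rewrite gt_eqF.
have Hl : (fun h : R => h * (D / 2)) @ 0^'+ --> 0 * (D/2).
  apply: cvg_at_right_filter; apply: cvgMr_tmp; exact: cvg_id.
have Hr : (fun h => q h - h * (D/2)) @ 0^'+ --> 'D_(z-x) om x - 0 * (D/2).
  exact: cvgB.
rewrite mul0r subr0 in Hr.
suff : 'D_(z - x) om x <= om z - om x - D / 2 by lra.
apply: (cvgr_to_le Hr).
near=> h.
have h0 : 0 < h by near: h; exact: nbhs_right_gt.
have h1 : h < 1 by near: h; exact: nbhs_right_lt.
have := sc z x h zX xX.
rewrite (ltW h0) (ltW h1) /= => /(_ isT).
have -> : h *: z + (1 - h) *: x = h *: (z - x) + x.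
  by apply/matrixP=> i j; rewrite !mxE; ring.
rewrite /q /= => H.
change (scalemx h (z - x)) with (h *: (z - x)).
move: H; rewrite -/D; set w := om _ => H.
suff : h^-1 * (w - om x) <= om z - om x - D / 2 + h * (D / 2).
  move=> HH; have -> : h^-1 *: (w - om x) = h^-1 * (w - om x) by []. lra.
rewrite mulrC ler_pdivrMr //.
clearbody D w.
have -> : (om z - om x - D / 2 + h * (D / 2)) * h =
  h * om z + (1 - h) * om x - h * (1 - h) / 2 * D - om x by ring.
lra.
Unshelve. all: by end_near.
Qed.

Lemma small_t (u c : R) : 0 <= c -> (forall t, 0 < t -> t < 1 -> u <= t * c) -> u <= 0.
Proof.
move=> c0 H; rewrite leNgt; apply/negP => u0.
have cu : 0 < c + u by lra.
have t0 : 0 < u / (2 * (c + u)) by apply: divr_gt0 => //; lra.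
have t1 : u / (2 * (c + u)) < 1 by rewrite ltr_pdivrMr ?mulr_gt0 //; lra.
have := H _ t0 t1.
rewrite mulrAC ler_pdivlMr ?mulr_gt0 //; nra.
Qed.

Lemma dual_le m (nr : 'rV[R]_m -> R) y c z :
  is_norm nr -> dual_norm_le nr y c -> dotr y z <= c * nr z.
Proof.
move=> [n0 n1 nZ _] H.
have [nz0|] := eqVneq (nr z) 0.
  by rewrite nz0 mulr0 (n1 _ nz0) /dotr big1 // => j _; rewrite mxE mulr0.
move=> nz; have nzp : 0 < nr z by rewrite lt_neqAle eq_sym nz n0.
have := H ((nr z)^-1 *: z).
rewrite nZ ger0_norm ?invr_ge0 // mulVf // lexx => /(_ isT).
rewrite /dotr => HH.
have E : \sum_(j < m) y 0 j * z 0 j = nr z * \sum_(j < m) y 0 j * ((nr z)^-1 *: z) 0 j.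
  rewrite mulr_sumr; apply: eq_bigr => j _; rewrite mxE.
  by rewrite [RHS]mulrCA mulVKf.
by rewrite E [c * _]mulrC ler_pM2l.
Qed.

Lemma prox_descent m (X : set 'rV[R]_m) nr om dom chi P (x y : 'rV[R]_m) gamma :
  is_norm nr -> convex_set X -> strongly_convex_on X nr om ->
  (forall z, z \in X -> has_gradient_at om dom z) ->
  convex_function X chi -> is_prox_map X om dom chi P ->
  x \in X -> 0 < gamma ->
  dotr y (P x y gamma - x) + chi (P x y gamma) - chi x
    <= - gamma^-1 * nr (P x y gamma - x) ^+ 2.
Proof.
move=> [n0 n1 nZ _] cX sc hg cchi hP xX g0.
have [pX Hmin] := hP x y gamma xX g0.
set xp := P x y gamma in pX Hmin *.
set D := nr (xp - x) ^+ 2.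
have hB := breg_ge sc (hg x xX) xX pX.
rewrite -/D in hB.
have ND : nr (x - xp) ^+ 2 = D.
  by rewrite -opprB -scaleN1r nZ normrN normr1 mul1r.
set a := dotr y (xp - x).
set c := dotr (dom x) (xp - x).
set ig := gamma^-1.
have ig0 : 0 < ig by rewrite invr_gt0.
move: hB; rewrite /bregman -/c => hB.
suff : a + chi xp - chi x + ig * D <= 0 by lra.
apply: (@small_t _ (ig * D / 2)).
  by apply: divr_ge0 => //; apply: mulr_ge0; [exact: ltW|exact: sqr_ge0].
move=> t t0 t1.
pose T : {i01 R} := Itv01 (ltW t0) (ltW t1).
pose zt := ((x : convex_lmodType 'rV[R]_m) <| T |> (xp : convex_lmodType 'rV[R]_m)).
have ztX : zt \in X by exact: cX.
have zE : (zt : 'rV[R]_m) = t *: x + (1 - t) *: xp by [].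
have H1 := Hmin _ ztX.
have H2 := sc x xp t xX pX; rewrite (ltW t0) (ltW t1) /= in H2.
have H3 := cchi T x xp xX pX.
move/(_ isT): H2; rewrite ND => H2.
have H3' : chi (t *: x + (1 - t) *: xp) <= t * chi x + (1 - t) * chi xp by exact: H3.
rewrite zE in H1.
have E1 : t *: x + (1 - t) *: xp - x = (1 - t) *: (xp - x).
  by apply/matrixP=> i j; rewrite !mxE; ring.
move: H1; rewrite /prox_obj /bregman E1 !dotrZr -/a -/c -/ig.
move=> H1; set w := om (t *: x + _) in H1 H2; set k := chi (t *: x + _) in H1 H3'.
clearbody D a c ig w k.
have H2' : ig * w <= ig * (t * om x + (1 - t) * om xp - t * (1 - t) / 2 * D).
  by rewrite ler_pM2l.
have hB' : ig * (D / 2) <= ig * (om xp - om x - c) by rewrite ler_pM2l.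
suff : t * (a + chi xp - chi x + ig * D) <= t * (t * (ig * D / 2)).
  by rewrite ler_pM2l.
nra.
Qed.
Lemma poly_der (c0 K t : R) : is_derive t 1 (fun s : R => s * c0 + s * s * (K / 2)) (c0 + t * K).
Proof.
have H1 : is_derive t 1 (fun s : R => s * c0) c0.
  have := @is_deriveM R R id (cst c0) t 1 1 0 _ _.
  rewrite /= scaler0 add0r /cst => H.
  have := H (is_derive_id _ _) (is_derive_cst _ _ _).
  by rewrite /GRing.scale /= mulr1.
have H2 : is_derive t 1 (fun s : R => s * s * (K / 2)) (t * K).
  have := @is_deriveM R R (id * id) (cst (K/2)) t 1 (t * 1 + t * 1) 0 _ _.
  rewrite /= scaler0 add0r /cst => H.
  have := H (@is_deriveM R R id id t 1 1 1 (is_derive_id _ _) (is_derive_id _ _)) (is_derive_cst _ _ _).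
  rewrite /GRing.scale /= => HH.
  have E : forall a b : R, a * b = b / 2 * (a * 1 + a * 1) by move=> a b; field.
  rewrite (E t K).
  exact HH.
have := is_deriveD H1 H2.
done.
Qed.

Lemma descent_gen m (f : 'rV[R]_m -> R) g (x e : 'rV[R]_m) (K : R) :
  (forall z, has_gradient_at f g z) ->
  (forall t, 0 < t -> t < 1 -> dotr (g (x + t *: e)) e - dotr (g x) e <= t * K) ->
  f (x + e) <= f x + dotr (g x) e + K / 2.
Proof.
move=> hg hL.
set c0 := dotr (g x) e.
have Hf1 : forall t : R, is_derive t (1:R) (fun s : R => f (x + s *: e)) (dotr (g (x + t *: e)) e).
  move=> t; have [dft dfe] := hg (x + t *: e).
  have Hd := @diff_derivable _ _ _ f (x + t *: e) e dft.
  have E : (fun h : R => h^-1 *: (((fun s : R => f (x + s *: e)) \o shift t) (h *: 1)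
                                   - (fun s : R => f (x + s *: e)) t)) =
           (fun h : R => h^-1 *: ((f \o shift (x + t *: e)) (h *: e) - f (x + t *: e))).
    apply: funext => h /=.
    congr (_ *: (f _ - _)).
    apply/matrixP=> i j; rewrite !mxE -[h%:A]/(h * 1) mulr1; ring.
  apply: DeriveDef; first by rewrite /derivable E.
  by rewrite /derive E -/(derive f (x + t *: e) e) deriveE // dfe.
pose k := fun s : R => f (x + s *: e) - (s * c0 + s * s * (K / 2)).
have Hk : forall t : R, is_derive t (1:R) k (dotr (g (x + t *: e)) e - (c0 + t * K)).
  by move=> t; exact (is_deriveB (Hf1 t) (poly_der c0 K t)).
have kc : {within `[0, 1], continuous k}.
  apply: derivable_within_continuous => t _; exact: (@ex_derive _ _ _ _ _ _ _ (Hk t)).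
have [c cI Hc] := MVT ltr01 (fun t _ => Hk t) kc.
have c0' : 0 < c by move: cI; rewrite in_itv /= => /andP [].
have c1 : c < 1 by move: cI; rewrite in_itv /= => /andP [].
have := hL c c0' c1; rewrite -/c0 => Hle.
move: Hc; rewrite /k scale1r scale0r addr0 subr0 mulr1 !mul1r !mul0r => Hc.
lra.
Qed.
End An.
Section Step.
Variable R : realType.
Variables (b : nat) (n : 'I_b -> nat).
Local Notation NN := (\sum_(i < b) n i)%N.

Lemma one_step (X : forall i, set 'rV[R]_(n i)) (nrm : forall i, 'rV[R]_(n i) -> R)
  (f : 'rV[R]_NN -> R) (g : 'rV[R]_NN -> 'rV[R]_NN) (L : 'I_b -> R)
  (chi : forall i, 'rV[R]_(n i) -> R) (omega : forall i, 'rV[R]_(n i) -> R)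
  (domega : forall i, 'rV[R]_(n i) -> 'rV[R]_(n i))
  (P : forall i, 'rV[R]_(n i) -> 'rV[R]_(n i) -> R -> 'rV[R]_(n i))
  (x : 'rV[R]_NN) (i : 'I_b) (gamma : R) :
  is_norm (nrm i) -> convex_set (X i) ->
  (forall x, has_gradient_at f g x) ->
  0 <= L i ->
  (forall x (rho : 'rV[R]_(n i)),
      dual_norm_le (nrm i) (blk (g (x + embed rho)) i - blk (g x) i)
                   (L i * nrm i rho)) ->
  convex_function (X i) (chi i) ->
  (forall z, z \in X i -> has_gradient_at (omega i) (domega i) z) ->
  strongly_convex_on (X i) (nrm i) (omega i) ->
  is_prox_map (X i) (omega i) (domega i) (chi i) (P i) ->
  blk x i \in X i -> 0 < gamma ->
  phi f chi (upd x (P i (blk x i) (blk (g x) i) gamma))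
    <= phi f chi x - gamma * (1 - L i / 2 * gamma) *
        nrm i (gamma^-1 *: (blk x i - P i (blk x i) (blk (g x) i) gamma)) ^+ 2.
Proof.
move=> hn cX hf L0 hL cchi hom sc hP xX g0.
set v := P i _ _ gamma.
set d := v - blk x i.
set D := nrm i d ^+ 2.
have hn' := hn; case: hn' => [n0 n1 nZ _].
have Hf : f (x + embed d) <= f x + dotr (blk (g x) i) d + L i * D / 2.
  have := @descent_gen R _ f g x (embed d) (L i * D) hf.
  rewrite dotr_embed mulrA; apply => t t0 t1.
  rewrite -embedZ !dotr_embed -dotrBl.
  apply: le_trans (dual_le d hn (hL x (t *: d))) _.
  by rewrite nZ ger0_norm ?(ltW t0) // !mulrA [L i * t]mulrC.
have Hp := prox_descent (blk (g x) i) hn cX sc hom cchi hP xX g0.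
rewrite -/v -/d -/D in Hp.
rewrite phi_upd upd_embed -/d /phi.
have ND : nrm i (gamma^-1 *: (blk x i - v)) ^+ 2 = gamma^-1 ^+ 2 * D.
  rewrite nZ -opprB -scaleN1r nZ normrN normr1 mul1r ger0_norm ?invr_ge0 ?ltW //.
  by rewrite exprMn.
rewrite ND.
have -> : gamma * (1 - L i / 2 * gamma) * (gamma^-1 ^+ 2 * D) = gamma^-1 * D - L i * D / 2.
  by field; rewrite gt_eqF.
lra.
Qed.
End Step.

Unset Implicit Arguments.
Set Strict Implicit.


Section Iter.
Variable R : realType.
Variables (b : nat) (n : 'I_b -> nat).
Local Notation NN := (\sum_(i < b) n i)%N.
Variables (K : nat) (g : 'rV[R]_NN -> 'rV[R]_NN)
  (P : forall i, 'rV[R]_(n i) -> 'rV[R]_(n i) -> R -> 'rV[R]_(n i))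
  (gamma : nat -> R) (x1 : 'rV[R]_NN).

Lemma sbmd_iterS (s : 'I_K -> 'I_b) (k : 'I_K) :
  sbmd_iter g P gamma x1 s k.+1 =
  upd (sbmd_iter g P gamma x1 s k)
    (P (s k) (blk (sbmd_iter g P gamma x1 s k) (s k))
       (blk (g (sbmd_iter g P gamma x1 s k)) (s k)) (gamma k)).
Proof.
rewrite /= insubT /=; first exact: ltn_ord.
move=> kK; have -> : Sub (k : nat) kK = k by apply: val_inj.
by [].
Qed.

Lemma iter_indep (s s' : 'I_K -> 'I_b) k :
  (forall j : 'I_K, (j < k)%N -> s j = s' j) ->
  sbmd_iter g P gamma x1 s k = sbmd_iter g P gamma x1 s' k.
Proof.
elim: k => [//|k IH] H /=.
rewrite IH; last by move=> j jk; apply: H; exact: ltnW.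
case: insubP => [j _ jE|//].
by rewrite H // jE.
Qed.

Lemma iter_inX (X : forall i, set 'rV[R]_(n i)) (s : 'I_K -> 'I_b) k :
  (forall i u y (ga : R), u \in X i -> 0 < ga -> P i u y ga \in X i) ->
  (forall k, 0 < gamma k) -> inX X x1 -> inX X (sbmd_iter g P gamma x1 s k).
Proof.
move=> hP hg hx; elim: k => [//|k IH] /=.
case: insubP => [j _ jE|//] i.
have [<-|ij] := eqVneq (s j) i; first by rewrite blk_upd_id; apply: hP.
by rewrite blk_upd_ne.
Qed.
End Iter.

Lemma sym_sum (R : realType) (b K : nat) (k : 'I_K)
  (h : {ffun 'I_K -> 'I_b} -> 'I_b -> R) :
  (0 < b)%N ->
  (forall (s : {ffun 'I_K -> 'I_b}) (c : 'I_b), h [ffun j => if j == k then c else s j] = h s) ->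
  \sum_s h s (s k) = b%:R^-1 * \sum_s \sum_i h s i.
Proof.
case: b h => [//|b'] h _ hinv.
have key : forall c : 'I_b'.+1, \sum_s h s (s k) = \sum_s h s (s k + c).
  move=> c.
  rewrite (reindex_inj (h := fun s : {ffun 'I_K -> 'I_b'.+1} =>
              [ffun j => if j == k then s j + c else s j])); last first.
    move=> s1 s2 /ffunP E; apply/ffunP => j; have := E j; rewrite !ffunE.
    by case: eqP => _ //; apply: addIr.
  apply: eq_bigr => s _; rewrite ffunE eqxx.
  have -> : [ffun j => if j == k then s j + c else s j] =
            [ffun j => if j == k then s k + c else s j].
    by apply/ffunP => j; rewrite !ffunE; case: eqP => // ->.
  by rewrite hinv.
have E : \sum_(c : 'I_b'.+1) \sum_s h s (s k) = \sum_s \sum_i h s i.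
  transitivity (\sum_(c : 'I_b'.+1) \sum_s h s (s k + c)).
    by apply: eq_bigr => c _; exact: key.
  rewrite exchange_big; apply: eq_bigr => s _.
  by rewrite [RHS](reindex_inj (addrI (s k))).
rewrite -E sumr_const card_ord; set S := \sum_s h s (s k).
rewrite -[S *+ _]mulr_natr mulrC mulfK //.
Qed.

Lemma bigmax_ge (R : realType) m (F : 'I_m -> R) x0 j :
  F j <= \big[Num.max/x0]_(i < m) F i.
Proof.
have : j \in index_enum 'I_m by rewrite mem_index_enum.
elim: (index_enum 'I_m) => [//|a r IH].
rewrite in_cons big_cons => /orP [/eqP ->|/IH H]; first by rewrite le_max lexx.
by rewrite le_max H orbT.
Qed.

Lemma bigmin_le (R : realType) m (F : 'I_m -> R) x0 j :
  \big[Num.min/x0]_(i < m) F i <= F j.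
Proof.
have : j \in index_enum 'I_m by rewrite mem_index_enum.
elim: (index_enum 'I_m) => [//|a r IH].
rewrite in_cons big_cons => /orP [/eqP ->|/IH H]; first by rewrite ge_min lexx.
by rewrite ge_min H orbT.
Qed.

Lemma bigmin_ge (R : realType) m (F : 'I_m -> R) x0 c :
  c <= x0 -> (forall i, c <= F i) -> c <= \big[Num.min/x0]_(i < m) F i.
Proof.
move=> h0 hF; elim/big_ind: _ => // u v hu hv.
by rewrite le_min hu hv.
Qed.

Theorem corollary4p4 (R : realType) (b : nat) (n : 'I_b -> nat)
  (X : forall i, set 'rV[R]_(n i))
  (nrm : forall i, 'rV[R]_(n i) -> R)
  (f : 'rV[R]_(\sum_(i < b) n i) -> R)
  (g : 'rV[R]_(\sum_(i < b) n i) -> 'rV[R]_(\sum_(i < b) n i))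
  (L : 'I_b -> R)
  (chi : forall i, 'rV[R]_(n i) -> R)
  (omega : forall i, 'rV[R]_(n i) -> R)
  (domega : forall i, 'rV[R]_(n i) -> 'rV[R]_(n i))
  (Q : R)
  (P : forall i, 'rV[R]_(n i) -> 'rV[R]_(n i) -> R -> 'rV[R]_(n i))
  (phistar : R) (x1 : 'rV[R]_(\sum_(i < b) n i)) (N : nat) :
  (0 < b)%N ->
  (forall i, is_norm (nrm i)) ->
  (forall i, closed (X i) /\ convex_set (X i)) ->
  (* f smooth (possibly nonconvex) with gradient g *)
  (forall x, has_gradient_at f g x) ->
  (* block-wise Lipschitz partial gradients *)
  (forall i, 0 < L i) ->
  (forall i x (rho : 'rV[R]_(n i)),
      dual_norm_le (nrm i) (blk (g (x + embed rho)) i - blk (g x) i)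
                   (L i * nrm i rho)) ->
  (* chi_i closed convex *)
  (forall i, convex_function (X i) (chi i) /\ closed_fun_on (X i) (chi i)) ->
  (* omega_i continuously differentiable on X_i, 1-strongly convex *)
  (forall i, (forall z, z \in X i -> has_gradient_at (omega i) (domega i) z)
             /\ {within X i, continuous (domega i)}
             /\ strongly_convex_on (X i) (nrm i) (omega i)) ->
  (* quadratic growth of the Bregman distance *)
  (forall i z x, z \in X i -> x \in X i ->
      bregman (omega i) (domega i) z x <= Q / 2 * nrm i (z - x) ^+ 2) ->
  (* P_i is the composite prox-mapping *)
  (forall i, is_prox_map (X i) (omega i) (domega i) (chi i) (P i)) ->
  (* phi^* = min_{x in X} phi(x) *)
  (exists2 xs, inX X xs & phi f chi xs = phistar) ->
  (forall x, inX X x -> phistar <= phi f chi x) ->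
  inX X x1 ->
  (0 < N)%N ->
  let Lbar := bmax L in
  let p := fun _ : 'I_b => (b%:R)^-1 in
  let gamma := fun _ : nat => Lbar^-1 in
  expected_gradmap_sqnorm N p L nrm g P gamma x1
    <= 2 * b%:R * Lbar * (phi f chi x1 - phistar) / N%:R.


Proof.
move=> b0 hnorm hX hf hL0 hLip hchi homega hQ hP hxs hmin hx1 hN; cbv zeta.
destruct b as [|b']; first by move: b0.
set Lbar := bmax L; set p := fun=> _; set gamma := fun=> Lbar^-1.
have LleLbar : forall i, L i <= Lbar by move=> i; exact: bigmax_ge.
have Lbar0 : 0 < Lbar by apply: lt_le_trans (hL0 ord0) (LleLbar ord0).
set g0 := Lbar^-1.
have g00 : 0 < g0 by rewrite invr_gt0.
set bb := (b'.+1)%:R : R.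
have bb0 : 0 < bb by rewrite ltr0n.
set m := bmin (fun i => bb^-1 * (1 - L i / 2 * g0)).
have m_le : forall i, m <= bb^-1 * (1 - L i / 2 * g0).
  by move=> i; exact: bigmin_le.
have termge : forall i, (2 * bb)^-1 <= bb^-1 * (1 - L i / 2 * g0).
  move=> i; have := LleLbar i => hi.
  have h1 : L i * g0 <= 1 by rewrite /g0 ler_pdivrMr // mul1r.
  have -> : L i / 2 * g0 = (L i * g0) / 2 by rewrite mulrAC.
  rewrite invfM [bb^-1 * _]mulrC ler_pM2r ?invr_gt0 //; lra.
have m_ge : (2 * bb)^-1 <= m by apply: bigmin_ge => //; exact: termge.
have m0 : 0 < m by apply: lt_le_trans m_ge; rewrite invr_gt0 mulr_gt0.
set w := g0 * m.
have w0 : 0 < w by rewrite mulr_gt0.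
have wE : forall k, probR_weight p L gamma k = w by [].
have PX : forall i u y ga, u \in X i -> 0 < ga -> P i u y ga \in X i.
  by move=> i u y ga uX h; exact: (hP i u y ga uX h).1.
have gam0 : forall k, 0 < gamma k by [].
have inXs : forall (s : 'I_N -> 'I_b'.+1) k, inX X (sbmd_iter g P gamma x1 s k).
  by move=> s k; exact: (@iter_inX R b'.+1 n N g P gamma x1 X s k PX gam0 hx1).
pose T (s : 'I_N -> 'I_b'.+1) k i := let x := sbmd_iter g P gamma x1 s k in
  nrm i (g0^-1 *: (blk x i - P i (blk x i) (blk (g x) i) g0)) ^+ 2.
have step : forall (s : 'I_N -> 'I_b'.+1) (k : 'I_N),
  phi f chi (sbmd_iter g P gamma x1 s k.+1) <=
  phi f chi (sbmd_iter g P gamma x1 s k) - bb * w * T s k (s k).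
  move=> s k; rewrite sbmd_iterS.
  set x := sbmd_iter g P gamma x1 s k; set i := s k.
  have := @one_step R b'.+1 n X nrm f g L chi omega domega P x i g0
    (hnorm i) (hX i).2 hf (ltW (hL0 i)) (hLip i) (hchi i).1 (homega i).1
    (homega i).2.2 (hP i) (inXs s k i) g00.
  move=> H; apply: le_trans H _; rewrite lerB // /T -/x -/i.
  apply: ler_wpM2r; first exact: sqr_ge0.
  rewrite /w mulrCA ler_pM2l //.
  have h := m_le i; rewrite -(ler_pM2l bb0) mulVKf ?gt_eqF in h => //.
pose E k := \sum_(s : {ffun 'I_N -> 'I_b'.+1}) phi f chi (sbmd_iter g P gamma x1 s k).
pose G k := \sum_(s : {ffun 'I_N -> 'I_b'.+1})
  gradmap_sqnorm nrm P (sbmd_iter g P gamma x1 s k) (g (sbmd_iter g P gamma x1 s k)) (gamma k).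
have Estep : forall k : 'I_N, E k.+1 <= E k - w * G k.
  move=> k.
  have H1 : E k.+1 <= \sum_(s : {ffun 'I_N -> 'I_b'.+1})
      (phi f chi (sbmd_iter g P gamma x1 s k) - bb * w * T s k (s k)).
    by apply: ler_sum => s _; exact: step.
  rewrite sumrB -mulr_sumr in H1.
  have Hsym := @sym_sum R b'.+1 N k (fun s i => T s k i) b0.
  rewrite Hsym in H1; last first.
    move=> s c; rewrite /T (@iter_indep R b'.+1 n N g P gamma x1 _ s) //.
    move=> j jk; rewrite ffunE; case: eqP => [E1|//].
    by rewrite E1 ltnn in jk.
  apply: (le_trans H1); rewrite /E lerB //.
  have EE : forall S : R, bb * w * (b'.+1%:R^-1 * S) = w * S.
    by move=> S; rewrite /bb; field; rewrite nat1r pnatr_eq0.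
  rewrite EE.
  rewrite /G ler_pM2l //; apply: ler_sum => s _.
have tele : forall k, (k <= N)%N -> \sum_(j < k) w * G j <= E 0%N - E k.
  elim=> [_|k IH kN]; first by rewrite big_ord0 subrr.
  rewrite big_ord_recr /=.
  have := Estep (Ordinal kN); have := IH (ltnW kN); rewrite /=; lra.
set cS := #|{ffun 'I_N -> 'I_b'.+1}|.
have E0 : E 0%N = cS%:R * phi f chi x1.
  by rewrite /E (eq_bigr (fun _ => phi f chi x1)) // sumr_const mulr_natl.
have EN : cS%:R * phistar <= E N.
  rewrite mulr_natl -sumr_const /E; apply: ler_sum => s _; exact: hmin.
have cSE : cS%:R = bb ^+ N by rewrite /cS card_ffun !card_ord natrX.
have Delta0 : 0 <= phi f chi x1 - phistar by rewrite subr_ge0; exact: hmin.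
have HG : w * \sum_(k < N) G k <= bb ^+ N * (phi f chi x1 - phistar).
  rewrite mulr_sumr; apply: le_trans (tele N (leqnn N)) _.
  rewrite E0 -cSE; lra.
have N0 : 0 < N%:R :> R by rewrite ltr0n.
have hp : forall s : {ffun 'I_N -> 'I_b'.+1}, \prod_(j < N) p (s j) = bb^-1 ^+ N.
  by move=> s; rewrite /p prodr_const card_ord.
have hpr : forall k, probR N p L gamma k = N%:R^-1.
  move=> k; rewrite /probR wE (eq_bigr (fun _ => w)) // sumr_const card_ord.
  by rewrite -[w *+ _]mulr_natr invfM mulrA mulfV ?gt_eqF // mul1r.
have hexp : expected_gradmap_sqnorm N p L nrm g P gamma x1
    = bb^-1 ^+ N * N%:R^-1 * \sum_(k < N) G k.
  transitivity (\sum_(s : {ffun 'I_N -> 'I_b'.+1}) bb^-1 ^+ N * N%:R^-1 *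
     \sum_(k < N) gradmap_sqnorm nrm P (sbmd_iter g P gamma x1 s k)
        (g (sbmd_iter g P gamma x1 s k)) (gamma k)).
    apply: eq_bigr => s _; rewrite hp -mulrA; congr (_ * _).
    by rewrite mulr_sumr; apply: eq_bigr => k _; rewrite hpr.
  by rewrite -mulr_sumr /G exchange_big.
rewrite hexp.
set SG := \sum_(k < N) G k in HG *.
set Dl := phi f chi x1 - phistar in HG Delta0 *.
have q0 : 0 < bb ^+ N by rewrite exprn_gt0.
have A1 : bb^-1 ^+ N * SG <= Dl / w.
  rewrite ler_pdivlMr // -(ler_pM2l q0) exprVn.
  have -> : bb ^+ N * ((bb ^+ N)^-1 * SG * w) = w * SG by field; rewrite gt_eqF.
  exact: HG.
have m2 : 1 <= 2 * bb * m.
  by rewrite -(ler_pM2l (mulr_gt0 (ltr0Sn _ 1) bb0)) in m_ge; rewrite mulfV ?gt_eqF ?mulr_gt0 in m_ge.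
have A2 : Dl / w <= 2 * bb * Lbar * Dl.
  have -> : Dl / w = Dl * Lbar / m.
    by rewrite /w /g0; field; rewrite !gt_eqF.
  rewrite ler_pdivrMr //.
  have h1 : 0 <= Dl * Lbar by apply: mulr_ge0 => //; exact: ltW.
  have -> : 2 * bb * Lbar * Dl * m = (Dl * Lbar) * (2 * bb * m) by ring.
  by rewrite ler_peMr.
rewrite mulrAC ler_pM2r ?invr_gt0 //.
exact: le_trans A1 A2.
Qed.
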